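(* Let $X=\{0,1,2,3\}$ and let $a,b,c$ be the transformations of $X^\ast$ defined recursively (with $\emptyset\mapsto\emptyset$) by $a(0w)=1\,a(w)$, $a(1w)=0w$, $a(2w)=2w$, $a(3w)=3w$; $b(0w)=2\,b(w)$, $b(2w)=0w$, $b(1w)=1w$, $b(3w)=3w$; $c(0w)=3\,c(w)$, $c(3w)=0w$, $c(1w)=1w$, $c(2w)=2w$. For $n\ge 1$ let $A_n=a_n+a_n^{-1}+b_n+b_n^{-1}+c_n+c_n^{-1}$, where $a_n,b_n,c_n$ are the $4^n\times 4^n$ permutation matrices of the actions of $a,b,c$ on $X^n$, and let $P_n(\lambda)=\det(\lambda I-A_n)$. Then for every $n\ge1$, $$P_{n+1}(\lambda)=(\lambda-4)^{2\cdot 4^n}\,P_n(f(\lambda)),\qquad f(\lambda)=\lambda^2-4\lambda-6,$$ and $P_1(\lambda)=(\lambda-6)(\lambda+2)(\lambda-4)^2$.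
   Context: $A_n$ is the adjacency matrix of the $n$-th Schreier graph of the group generated by $a,b,c$ (the star automaton group of the star with 3 leaves) acting on words of length $n$; $P_n$ is its (monic) characteristic polynomial. *)

(* Defs.v *)
From HB Require Import structures.
From mathcomp Require Import all_boot all_order all_algebra.
Set Implicit Arguments. Unset Strict Implicit. Unset Printing Implicit Defensive.
Import Order.TTheory GRing.Theory Num.Theory.
Local Open Scope ring_scope.

Definition letter := 'I_4.

(* The generator acting on the "branch" k (k = 1 for a, 2 for b, 3 for c):
     g(0w) = k g(w),  g(kw) = 0w,  g(xw) = xw otherwise,  g(empty) = empty. *)
Fixpoint gen (k : letter) (w : seq letter) : seq letter :=
  match w with
  | [::] => [::]
  | x :: w' => if nat_of_ord x == 0%N then k :: gen k w'
               else if x == k then (ord0 : letter) :: w'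
               else x :: w'
  end.

Definition la : letter := inord 1.
Definition lb : letter := inord 2.
Definition lc : letter := inord 3.

Definition word (n : nat) := n.-tuple letter.
Definition N (n : nat) := #|{: word n}|.

Definition permM (k : letter) (n : nat) : 'M[int]_(N n) :=
  \matrix_(i, j) ((gen k (val (enum_val i)) == val (enum_val j)) : bool)%:R.

Definition Amx (n : nat) : 'M[int]_(N n) :=
  permM la n + invmx (permM la n) + permM lb n + invmx (permM lb n)
  + permM lc n + invmx (permM lc n).

Definition Pn (n : nat) : {poly int} := char_poly (Amx n).

Definition fpoly : {poly int} := 'X^2 - 4%:P * 'X - 6%:P.

(* Main.v *)
Require Import Defs.
From HB Require Import structures.
From mathcomp Require Import all_boot all_order all_algebra.
Set Implicit Arguments. Unset Strict Implicit. Unset Printing Implicit Defensive.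
Import Order.TTheory GRing.Theory Num.Theory.
Local Open Scope ring_scope.
From mathcomp Require fingroup perm.
From mathcomp Require Import ring zify.

Lemma gen_size k w : size (gen k w) = size w.
Proof. by elim: w => //= x w IH; case: ifP => _ //=; rewrite ?IH //; case: ifP. Qed.

Lemma gen_cons_eq k x u y v :
  (gen k (x :: u) == y :: v) =
  if nat_of_ord x == 0%N then (y == k) && (gen k u == v)
  else if x == k then (y == ord0) && (u == v) else (x == y) && (u == v).
Proof.
rewrite /=; case: ifP => _; first by rewrite eqseq_cons eq_sym.
by case: ifP => _; rewrite eqseq_cons // eq_sym.
Qed.

Fixpoint ginv (k : letter) (w : seq letter) : seq letter :=
  match w with
  | [::] => [::]
  | y :: v => if y == k then (ord0 : letter) :: ginv k v
              else if nat_of_ord y == 0%N then k :: v else y :: v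
  end.

Lemma gen_inj k : nat_of_ord k != 0%N -> injective (gen k).
Proof.
move=> k0; apply: (can_inj (g := ginv k)); elim=> [|x u IH] //=.
case: ifP => x0 /=.
  by rewrite eqxx IH; congr (_ :: _); apply/val_inj; rewrite /= (eqP x0).
case: ifP => xk /=.
  have -> : ((ord0 : letter) == k) = false by apply/negbTE; apply: contra k0 => /eqP <-.
  by rewrite /= (eqP xk).
by rewrite xk x0.
Qed.



Lemma la0 : nat_of_ord la != 0%N. Proof. by rewrite /la inordK. Qed.
Lemma lb0 : nat_of_ord lb != 0%N. Proof. by rewrite /lb inordK. Qed.
Lemma lc0 : nat_of_ord lc != 0%N. Proof. by rewrite /lc inordK. Qed.

Definition gt k n (t : word n) : word n := Tuple (introT eqP (etrans (gen_size k t) (size_tuple t))).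

Lemma permME k n i j : permM k n i j = (gt k (enum_val i) == enum_val j)%:R.
Proof. by rewrite mxE. Qed.

Lemma gt_inj k n : nat_of_ord k != 0%N -> injective (@gt k n).
Proof. by move=> k0 t1 t2 /(congr1 val) /= /(gen_inj k0) /val_inj. Qed.

Section PM.
Variables (T : finType) (g : T -> T).
Hypothesis ginj : injective g.
Definition PMx : 'M[int]_#|T| := \matrix_(i, j) (g (enum_val i) == enum_val j)%:R.

Lemma PMx_tr : PMx *m PMx^T = 1%:M.
Proof.
apply/matrixP => i j; rewrite !mxE (bigD1 (enum_rank (g (enum_val i)))) //=.
rewrite big1 ?addr0; last first.
  move=> l; rewrite !mxE => /negbTE hl.
  suff -> : (g (enum_val i) == enum_val l) = false by rewrite mul0r.
  by apply/negbTE; apply: contraFN hl => /eqP ->; rewrite enum_valK.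
rewrite !mxE enum_rankK eqxx mul1r (inj_eq ginj) (inj_eq enum_val_inj) eq_sym.
by case: (i == j).
Qed.

Lemma PMx_inv : invmx PMx = PMx^T.
Proof.
have [u _] := mulmx1_unit PMx_tr.
by rewrite -[LHS]mulmx1 -PMx_tr mulmxA mulVmx // mul1mx.
Qed.
End PM.

Lemma permM_PMx k n : permM k n = PMx (@gt k n).
Proof. by apply/matrixP => i j; rewrite !mxE. Qed.

Lemma permM_inv k n : nat_of_ord k != 0%N -> invmx (permM k n) = (permM k n)^T.
Proof. by move=> k0; rewrite permM_PMx PMx_inv //; apply: gt_inj. Qed.

Lemma permM_tr k n : nat_of_ord k != 0%N -> permM k n *m (permM k n)^T = 1%:M.
Proof. by move=> k0; rewrite permM_PMx PMx_tr //; apply: gt_inj. Qed.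

Lemma AmxT n : Amx n = permM la n + (permM la n)^T + permM lb n + (permM lb n)^T
  + permM lc n + (permM lc n)^T.
Proof. by rewrite /Amx !permM_inv // ?la0 ?lb0 ?lc0. Qed.

Definition adj (u v : seq letter) : int :=
  (gen la u == v)%:R + (gen la v == u)%:R + (gen lb u == v)%:R + (gen lb v == u)%:R
  + (gen lc u == v)%:R + (gen lc v == u)%:R.

Lemma AmxE n i j : Amx n i j = adj (val (enum_val i)) (val (enum_val j)).
Proof. by rewrite AmxT !mxE. Qed.

Lemma char_poly_reindex p m (A : 'M[int]_m) (B : 'M[int]_p) (h : 'I_p -> 'I_m) :
  p = m -> injective h -> (forall i j, B i j = A (h i) (h j)) ->
  char_poly B = char_poly A.
Proof.
move=> e; subst p => hinj hB; pose s := perm.perm hinj; rewrite /char_poly.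
have -> : char_poly_mx B = row_perm s (col_perm s (char_poly_mx A)).
  by apply/matrixP => i j; rewrite !mxE !perm.permE hB (inj_eq hinj).
rewrite row_permE col_permE !det_mulmx !det_perm perm.odd_permV.
by rewrite mulrCA -signr_addb addbb mulr1.
Qed.

Lemma e1 : (nat_of_ord la == 0%N) = false. Proof. by rewrite /la /lb /lc -?val_eqE /= ?inordK. Qed.
Lemma e2 : (nat_of_ord lb == 0%N) = false. Proof. by rewrite /la /lb /lc -?val_eqE /= ?inordK. Qed.
Lemma e3 : (nat_of_ord lc == 0%N) = false. Proof. by rewrite /la /lb /lc -?val_eqE /= ?inordK. Qed.
Lemma e4 : (nat_of_ord (ord0 : letter) == 0%N) = true. Proof. by rewrite /la /lb /lc -?val_eqE /= ?inordK. Qed.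
Lemma e5 : (la == lb) = false. Proof. by rewrite /la /lb /lc -?val_eqE /= ?inordK. Qed.
Lemma e6 : (la == lc) = false. Proof. by rewrite /la /lb /lc -?val_eqE /= ?inordK. Qed.
Lemma e7 : (lb == la) = false. Proof. by rewrite /la /lb /lc -?val_eqE /= ?inordK. Qed.
Lemma e8 : (lb == lc) = false. Proof. by rewrite /la /lb /lc -?val_eqE /= ?inordK. Qed.
Lemma e9 : (lc == la) = false. Proof. by rewrite /la /lb /lc -?val_eqE /= ?inordK. Qed.
Lemma e10 : (lc == lb) = false. Proof. by rewrite /la /lb /lc -?val_eqE /= ?inordK. Qed.
Lemma e11 : (la == ord0) = false. Proof. by rewrite /la /lb /lc -?val_eqE /= ?inordK. Qed.
Lemma e12 : (lb == ord0) = false. Proof. by rewrite /la /lb /lc -?val_eqE /= ?inordK. Qed.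
Lemma e13 : (lc == ord0) = false. Proof. by rewrite /la /lb /lc -?val_eqE /= ?inordK. Qed.
Lemma e14 : ((ord0 : letter) == la) = false. Proof. by rewrite /la /lb /lc -?val_eqE /= ?inordK. Qed.
Lemma e15 : ((ord0 : letter) == lb) = false. Proof. by rewrite /la /lb /lc -?val_eqE /= ?inordK. Qed.
Lemma e16 : ((ord0 : letter) == lc) = false. Proof. by rewrite /la /lb /lc -?val_eqE /= ?inordK. Qed.
Definition lettE := (e1, e2, e3, e4, e5, e6, e7, e8, e9, e10, e11, e12, e13, e14, e15, e16).

Ltac adjsimp := rewrite /adj !gen_cons_eq !lettE ?eqxx /=.

Ltac adjfin u v := adjsimp; rewrite ?(eq_sym v u); ring.

Section Blk.
Variable n : nat.
Local Notation m := (N n).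

Definition Bm : 'M[int]_(m, m + (m + m)) :=
  row_mx (1%:M + permM la n) (row_mx (1%:M + permM lb n) (1%:M + permM lc n)).
Definition Ablk : 'M[int]_(m + (m + (m + m))) := block_mx 0 Bm Bm^T 4%:M.

Definition hpair (i : 'I_(m + (m + (m + m)))) : letter * 'I_m :=
  match split i with
  | inl j => (ord0, j)
  | inr i2 => match split i2 with
     | inl j => (la, j)
     | inr i3 => match split i3 with inl j => (lb, j) | inr j => (lc, j) end
     end
  end.

Lemma idx4_ind (P : 'I_(m + (m + (m + m))) -> Prop) :
  (forall j, P (lshift _ j)) -> (forall j, P (rshift _ (lshift _ j))) ->
  (forall j, P (rshift _ (rshift _ (lshift _ j)))) ->
  (forall j, P (rshift _ (rshift _ (rshift _ j)))) -> forall i, P i.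
Proof.
move=> H0 H1 H2 H3 i; rewrite -(splitK i); case: (split i) => [j|i2] /=; first exact: H0.
rewrite -(splitK i2); case: (split i2) => [j|i3] /=; first exact: H1.
rewrite -(splitK i3); case: (split i3) => [j|j] /=; first exact: H2.
exact: H3.
Qed.

Lemma hp0 j : hpair (lshift _ j) = (ord0, j).
Proof. by rewrite /hpair -[lshift _ j]/(unsplit (inl j)) unsplitK. Qed.
Lemma hp1 j : hpair (rshift _ (lshift _ j)) = (la, j).
Proof.
by rewrite /hpair -[lshift _ j]/(unsplit (inl j)) -[rshift _ _]/(unsplit (inr _)) !unsplitK.
Qed.
Lemma hp2 j : hpair (rshift _ (rshift _ (lshift _ j))) = (lb, j).
Proof.
by rewrite /hpair -[lshift _ j]/(unsplit (inl j)) -[rshift _ (unsplit _)]/(unsplit (inr _))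
  -[rshift _ (unsplit _)]/(unsplit (inr _)) !unsplitK.
Qed.
Lemma hp3 j : hpair (rshift _ (rshift _ (rshift _ j))) = (lc, j).
Proof.
by rewrite /hpair -[rshift _ j]/(unsplit (inr j)) -[rshift _ (unsplit _)]/(unsplit (inr _))
  -[rshift _ (unsplit _)]/(unsplit (inr _)) !unsplitK.
Qed.
Definition hpE := (hp0, hp1, hp2, hp3).

Definition hidx (i : 'I_(m + (m + (m + m)))) : 'I_(N n.+1) :=
  enum_rank (cons_tuple (hpair i).1 (enum_val (hpair i).2) : word n.+1).

Lemma hpair_inj : injective hpair.
Proof.
elim/idx4_ind => j; elim/idx4_ind => j'; rewrite !hpE => e;
  move: (congr1 fst e) (congr1 snd e) => /= /eqP; rewrite ?lettE ?eqxx // => _ -> //.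
Qed.

Lemma hidx_inj : injective hidx.
Proof.
move=> i j /enum_rank_inj /(congr1 val) /=; case: (hpair i) (hpair j) (@hpair_inj i j).
move=> x1 j1 [x2 j2] H [e1 /val_inj /enum_val_inj e2]; apply: H; by rewrite e1 e2.
Qed.

Lemma hidxE i : val (enum_val (hidx i)) = (hpair i).1 :: val (enum_val (hpair i).2).
Proof. by rewrite /hidx enum_rankK. Qed.

Lemma eq_idx (j j' : 'I_m) : (val (enum_val j) == val (enum_val j')) = (j == j').
Proof. by rewrite val_eqE (inj_eq enum_val_inj). Qed.

Lemma Ablk_entry i j : Ablk i j = Amx n.+1 (hidx i) (hidx j).
Proof.
rewrite AmxE !hidxE.
have E4 : (4%:M : 'M[int]_(m + (m+m))) = block_mx 4%:M 0 0 (block_mx 4%:M 0 0 4%:M).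
  by rewrite -!scalar_mx_block.
rewrite /Ablk E4 /Bm !tr_row_mx.
move: i j; elim/idx4_ind => i; elim/idx4_ind => j; rewrite !hpE /=;
rewrite ?(block_mxEul, block_mxEur, block_mxEdl, block_mxEdr, row_mxEl, row_mxEr, col_mxEu, col_mxEd);
rewrite ?mxE -?eq_idx ?mulr_natl.
all: adjsimp; try rewrite -[4 *+ _](mulr_natr 4); rewrite ?[val (enum_val j) == _]eq_sym; ring.
Qed.
End Blk.

Lemma Nn n : N n = (4 ^ n)%N.
Proof. by rewrite /N card_tuple card_ord. Qed.

Lemma claim1 n : char_poly (Amx n.+1) = char_poly (Ablk n).
Proof.
symmetry; apply: (@char_poly_reindex _ _ _ _ (@hidx n)).
- by rewrite !Nn expnS; lia.
- exact: hidx_inj.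
- exact: Ablk_entry.
Qed.

Lemma BBT n : Bm n *m (Bm n)^T = 6%:M + Amx n.
Proof.
rewrite /Bm !tr_row_mx !mul_row_col !linearD /= !trmx1 AmxT.
rewrite ?mulmxDl ?mulmxDr ?mul1mx !mulmx1 !permM_tr ?la0 ?lb0 ?lc0 //.
by apply/matrixP => i j; rewrite !mxE -[6 *+ _](mulr_natr 6); ring.
Qed.

Definition mu : {poly int} := 'X - 4%:P.

Lemma mu_neq0 : mu != 0. Proof. exact: monic_neq0 (monicXsubC _). Qed.

Lemma cpmx_blk n : char_poly_mx (Ablk n) =
  block_mx 'X%:M (- map_mx polyC (Bm n)) (- (map_mx polyC (Bm n))^T) mu%:M.
Proof.
rewrite /char_poly_mx /Ablk map_block_mx [X in X - _](scalar_mx_block (N n)).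
rewrite opp_block_mx add_block_mx map_mx0 oppr0 addr0 add0r map_trmx.
by rewrite map_scalar_mx /= add0r /mu raddfB.
Qed.

Lemma cpmx_mul n : let Bp := map_mx polyC (Bm n) in
  char_poly_mx (Ablk n) *m block_mx mu%:M 0 Bp^T 1%:M =
  block_mx (('X * mu)%:M - Bp *m Bp^T) (- Bp) 0 mu%:M.
Proof.
move=> Bp; rewrite cpmx_blk mulmx_block -/Bp.
rewrite !mulmx0 !mulmx1 ?add0r ?addr0. rewrite scalar_mxM !mulNmx !mul_mx_scalar ?mul_scalar_mx.
by rewrite addNr.
Qed.


Lemma claim2 n : char_poly (Ablk n) = mu ^+ (2 * N n) * (char_poly (Amx n) \Po fpoly).
Proof.
set Bp := map_mx polyC (Bm n).
have hT : \det (block_mx mu%:M 0 Bp^T 1%:M) = mu ^+ N n.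
  by rewrite det_lblock det_scalar det1 mulr1.
have hD : ('X * mu)%:M - Bp *m Bp^T = fpoly%:M - map_mx polyC (Amx n).
  rewrite /Bp map_trmx -map_mxM BBT map_mxD map_scalar_mx /= opprD addrA -raddfB /=.
  by congr (_%:M - _); rewrite /fpoly /mu; ring.
have hC : char_poly (Amx n) \Po fpoly = \det (fpoly%:M - map_mx polyC (Amx n)).
  rewrite /char_poly -det_map_mx; congr (determinant _).
  rewrite /char_poly_mx map_mxB map_scalar_mx /= comp_polyX; congr (_ - _).
  by apply/matrixP => i j; rewrite !mxE /= comp_polyC.
have := congr1 determinant (cpmx_mul n); rewrite det_mulmx hT det_ublock det_scalar hD -hC.
move=> e; apply: (mulIf (expf_neq0 (N n) mu_neq0)); rewrite /char_poly e.
rewrite [mu ^+ (2 * N n) * _]mulrC -mulrA -exprD; congr (_ * _ ^+ _); lia.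
Qed.

Lemma Amx0 : Amx 0 = 6%:M.
Proof.
apply/matrixP => i j.
have ij : i = j.
  have hi : (i < 1)%N := leq_trans (ltn_ord i) (eq_leq (Nn 0)).
  have hj : (j < 1)%N := leq_trans (ltn_ord j) (eq_leq (Nn 0)).
  apply/val_inj => /=; lia.
subst j; rewrite AmxE mxE eqxx (tuple0 (enum_val i)) /adj /=.
by [].
Qed.

Lemma Pn0 : Pn 0 = 'X - 6%:P.
Proof.
by rewrite /Pn /char_poly /char_poly_mx Amx0 map_scalar_mx -raddfB det_scalar Nn expr1.
Qed.

Theorem theorem3p2 :
  (forall n : nat, (1 <= n)%N ->
     Pn n.+1 = ('X - 4%:P) ^+ (2 * 4 ^ n) * (Pn n \Po fpoly))
  /\ Pn 1 = ('X - 6%:P) * ('X + 2%:P) * ('X - 4%:P) ^+ 2.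
Proof.
split.
  by move=> n _; rewrite /Pn claim1 claim2 [X in _ ^+ (2 * X)]Nn.
rewrite /Pn claim1 claim2 -/(Pn 0) Pn0 [X in _ ^+ (2 * X)]Nn comp_polyB comp_polyX comp_polyC /fpoly /mu.
ring.
Qed.
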